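(* Let $(X,Y,Z,W)$ be a solution of system (S) on $(-\infty,t_{max})$. Assume $Y,W>0$, $\lim_{t\to-\infty}(X,Y,Z,W)(t)=(0,0,1,0)$, and $\mathcal C>0$. Then: - if $X(t_0)<0$ for some $t_0$, then $X(t)<0$ for all $t\in(t_0,t_{max})$; - if $(Z-X)(t_0)<0$ for some $t_0$, then $(Z-X)(t)<0$ for all $t\in(t_0,t_{max})$. In particular, $\lim_{t\nearrow t_{max}}g(t)$ and $\lim_{t\nearrow t_{max}}W(t)/Y(t)$ exist in $\mathbb R\cup\{\pm\infty\}$.
   Context: Fix a positive integer $d$ and $q\in\mathbb R$. Put $A_2=d(d+2)$ and $A_3=\tfrac14d(d+2)^2q^2$. System (S) is $$X'=X(dX^2+Z^2-1)+\tfrac{A_2}{d}Y^2-2\tfrac{A_3}{d}W^2,\qquad Y'=Y(dX^2+Z^2-X),$$ $$Z'=Z(dX^2+Z^2-1)+A_3W^2,\qquad W'=W(dX^2+Z^2-2X+Z).$$ $g$ is a positive solution of $g'=gX$ and $\mathcal L=gY$. The first integral is $dX^2+A_2Y^2+Z^2-A_3W^2=1-\mathcal C\mathcal L^2$ with $\mathcal C$ constant; its sign does not depend on the normalization of $g$. *)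

(* Defs.v *)
From Stdlib Require Import Reals Lra.
Open Scope R_scope.

(* The maximal existence interval is (-oo, tmax); tmax = None encodes
   tmax = +oo, tmax = Some T encodes a finite right endpoint T. *)
Definition in_dom (tmax : option R) (t : R) : Prop :=
  match tmax with Some T => t < T | None => True end.

Definition A2 (d : nat) : R := INR d * (INR d + 2).
Definition A3 (d : nat) (q : R) : R := / 4 * INR d * (INR d + 2) ^ 2 * q ^ 2.

Definition solves_S (d : nat) (q : R) (tmax : option R) (X Y Z W : R -> R) : Prop :=
  forall t, in_dom tmax t ->
    derivable_pt_lim X t
      (X t * (INR d * X t ^ 2 + Z t ^ 2 - 1) + A2 d / INR d * Y t ^ 2
         - 2 * (A3 d q / INR d) * W t ^ 2) /\
    derivable_pt_lim Y t (Y t * (INR d * X t ^ 2 + Z t ^ 2 - X t)) /\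
    derivable_pt_lim Z t
      (Z t * (INR d * X t ^ 2 + Z t ^ 2 - 1) + A3 d q * W t ^ 2) /\
    derivable_pt_lim W t (W t * (INR d * X t ^ 2 + Z t ^ 2 - 2 * X t + Z t)).

Definition lim_minus_infty (f : R -> R) (l : R) : Prop :=
  forall eps, 0 < eps -> exists t1, forall t, t < t1 -> Rabs (f t - l) < eps.

Definition lim_at_tmax (tmax : option R) (f : R -> R) (l : R) : Prop :=
  forall eps, 0 < eps -> exists t1, in_dom tmax t1 /\
    forall t, t1 < t -> in_dom tmax t -> Rabs (f t - l) < eps.

Definition lim_at_tmax_pinfty (tmax : option R) (f : R -> R) : Prop :=
  forall M, exists t1, in_dom tmax t1 /\
    forall t, t1 < t -> in_dom tmax t -> M < f t.

Definition lim_at_tmax_minfty (tmax : option R) (f : R -> R) : Prop :=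
  forall M, exists t1, in_dom tmax t1 /\
    forall t, t1 < t -> in_dom tmax t -> f t < M.

Definition ext_lim_exists_at_tmax (tmax : option R) (f : R -> R) : Prop :=
  (exists l, lim_at_tmax tmax f l) \/ lim_at_tmax_pinfty tmax f
  \/ lim_at_tmax_minfty tmax f.

(* Main.v *)
Require Import Defs.
From Stdlib Require Import Reals Lra Psatz Classical.
Open Scope R_scope.

Definition ctsat (f : R -> R) (x : R) : Prop :=
  forall eps, 0 < eps -> exists del, 0 < del /\
    forall y, Rabs (y - x) < del -> Rabs (f y - f x) < eps.

Lemma cont_of_deriv f x l : derivable_pt_lim f x l -> ctsat f x.
Proof.
  intros Hd eps He.
  assert (Hc : continuity_pt f x) by (apply derivable_continuous_pt; exists l; exact Hd).
  destruct (Hc eps He) as [del [Hdel Hy]].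
  exists del; split; [lra|].
  intros y Hy'.
  destruct (Req_dec y x) as [->|Hne].
  - rewrite Rminus_diag, Rabs_R0; lra.
  - apply (Hy y). split.
    + unfold D_x, no_cond; split; auto.
    + simpl; unfold R_dist; exact Hy'.
Qed.

Lemma first_exit (f : R -> R) a b c :
  a < b -> (forall x, a <= x <= b -> ctsat f x) -> f a < c -> c <= f b ->
  exists t1, a < t1 <= b /\ f t1 = c /\ forall s, a <= s < t1 -> f s < c.
Proof.
  intros Hab Hc Ha Hb.
  set (E := fun x => a <= x <= b /\ forall s, a <= s <= x -> f s < c).
  assert (HEa : E a).
  { split; [lra|]. intros s Hs. replace s with a by lra. exact Ha. }
  assert (Hbd : bound E) by (exists b; intros x [Hx _]; lra).
  destruct (completeness E Hbd (ex_intro _ a HEa)) as [m [Hub Hlub]].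
  assert (Ham : a <= m) by (apply Hub; exact HEa).
  assert (Hmb : m <= b) by (apply Hlub; intros x [Hx _]; lra).
  assert (Key : forall s, a <= s < m -> f s < c).
  { intros s Hs.
    destruct (classic (exists x, E x /\ s < x)) as [[x [[Hx1 Hx2] Hsx]]|Hn].
    - apply Hx2; lra.
    - exfalso. assert (m <= s); [|lra].
      apply Hlub. intros x Hx. destruct (Rle_dec x s); auto.
      exfalso; apply Hn; exists x; split; auto; lra. }
  destruct (Rtotal_order (f m) c) as [Hlt|[Heq|Hgt]].
  - exfalso.
    destruct (Hc m (conj Ham Hmb) (c - f m)) as [del [Hdel Hy]]; [lra|].
    destruct (Req_dec m b) as [Hmb'|Hmb'].
    { subst m; lra. }
    set (y := Rmin b (m + del/2)).
    assert (Hy1 : m < y) by (unfold y; apply Rmin_glb_lt; lra).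
    assert (Hy2 : y <= b) by (unfold y; apply Rmin_l).
    assert (Hy3 : y <= m + del/2) by (unfold y; apply Rmin_r).
    assert (HEy : E y).
    { split; [lra|]. intros s Hs.
      destruct (Rlt_dec s m); [apply Key; lra|].
      assert (Rabs (s - m) < del) by (rewrite Rabs_right; lra).
      specialize (Hy s H). apply Rabs_def2 in Hy. lra. }
    specialize (Hub y HEy). lra.
  - exists m. destruct (Req_dec m a) as [->|Hma]; [lra|].
    split; [lra|]. split; auto.
  - exfalso.
    destruct (Hc m (conj Ham Hmb) (f m - c)) as [del [Hdel Hy]]; [lra|].
    destruct (Req_dec m a) as [->|Hma]; [lra|].
    set (s := Rmax a (m - del/2)).
    assert (Hs1 : s < m) by (unfold s; apply Rmax_lub_lt; lra).
    assert (Hs2 : a <= s) by (unfold s; apply Rmax_l).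
    assert (Hs3 : m - del/2 <= s) by (unfold s; apply Rmax_r).
    assert (Rabs (s - m) < del) by (rewrite Rabs_left; lra).
    specialize (Hy s H). apply Rabs_def2 in Hy.
    specialize (Key s (conj Hs2 Hs1)). lra.
Qed.

Lemma last_exit (f : R -> R) a b c :
  a < b -> (forall x, a <= x <= b -> ctsat f x) -> c < f a -> f b < c ->
  exists t, a <= t < b /\ f t = c /\ forall s, t < s <= b -> f s < c.
Proof.
  intros Hab Hc Ha Hb.
  destruct (first_exit (fun u => f (- u)) (-b) (-a) c) as [u [Hu [Hfu Hs]]].
  - lra.
  - intros x Hx eps He.
    destruct (Hc (-x) ltac:(lra) eps He) as [del [Hd Hy]].
    exists del; split; auto. intros y Hy'. apply Hy.
    replace (- y - - x) with (- (y - x)) by ring. rewrite Rabs_Ropp; auto.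
  - rewrite Ropp_involutive; auto.
  - rewrite Ropp_involutive; lra.
  - exists (- u). split; [lra|]. split; auto.
    intros s Hs'. specialize (Hs (- s) ltac:(lra)). rewrite Ropp_involutive in Hs; auto.
Qed.

Lemma left_approach f x l a :
  derivable_pt_lim f x l -> a < x -> (forall s, a <= s < x -> f s < f x) -> 0 <= l.
Proof.
  intros Hd Hax Hs.
  destruct (Rle_dec 0 l) as [|Hl]; auto. exfalso.
  destruct (Hd (- l)) as [del Hdel]; [lra|].
  set (h := - Rmin (del/2) ((x - a)/2)).
  assert (Hpos := cond_pos del).
  assert (h1 : Rmin (del/2) ((x-a)/2) <= del/2) by apply Rmin_l.
  assert (h2 : Rmin (del/2) ((x-a)/2) <= (x-a)/2) by apply Rmin_r.
  assert (h3 : 0 < Rmin (del/2) ((x-a)/2)) by (apply Rmin_glb_lt; lra).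
  assert (Hh0 : h <> 0) by (unfold h; lra).
  assert (Hh : Rabs h < del) by (unfold h; rewrite Rabs_left; lra).
  specialize (Hdel h Hh0 Hh).
  assert (Hfx : f (x + h) < f x) by (apply Hs; unfold h; lra).
  assert (Hq : 0 < (f (x + h) - f x) / h).
  { assert (Hh' : h < 0) by (unfold h; lra).
    replace ((f (x + h) - f x) / h) with ((f x - f (x + h)) / (- h)) by (field; lra).
    apply Rdiv_lt_0_compat; lra. }
  apply Rabs_def2 in Hdel. lra.
Qed.

Lemma mvt_pos f f' a b :
  a < b -> (forall c, a <= c <= b -> derivable_pt_lim f c (f' c)) ->
  (forall c, a < c < b -> 0 < f' c) -> f a < f b.
Proof.
  intros Hab Hd Hp. destruct (MVT_cor2 f f' a b Hab Hd) as [c [Hc1 Hc2]].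
  specialize (Hp c Hc2). assert (0 < f' c * (b - a)) by (apply Rmult_lt_0_compat; lra). lra.
Qed.

Lemma mvt_nonneg f f' a b :
  a <= b -> (forall c, a <= c <= b -> derivable_pt_lim f c (f' c)) ->
  (forall c, a < c < b -> 0 <= f' c) -> f a <= f b.
Proof.
  intros Hab Hd Hp. destruct (Req_dec a b) as [->|Hne]; [lra|].
  destruct (MVT_cor2 f f' a b ltac:(lra) Hd) as [c [Hc1 Hc2]].
  specialize (Hp c Hc2). assert (0 <= f' c * (b - a)) by (apply Rmult_le_pos; lra). lra.
Qed.

Lemma dl_val f x l l' : derivable_pt_lim f x l -> l = l' -> derivable_pt_lim f x l'.
Proof. intros H ->; exact H. Qed.

Lemma deriv_mul_exp f k x l m :
  derivable_pt_lim f x l -> derivable_pt_lim k x m ->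
  derivable_pt_lim (fun t => f t * exp (k t)) x (l * exp (k x) + f x * (exp (k x) * m)).
Proof.
  intros Hf Hk.
  apply (derivable_pt_lim_mult f (fun t => exp (k t))); auto.
  apply (derivable_pt_lim_comp k exp); auto.
  apply derivable_pt_lim_exp.
Qed.

Lemma dom_lt tmax s t : in_dom tmax t -> s <= t -> in_dom tmax s.
Proof. destruct tmax; simpl; auto; lra. Qed.

Lemma dom_ne tmax : exists t, in_dom tmax t.
Proof. destruct tmax as [T|]; [exists (T-1); simpl; lra | exists 0; simpl; auto]. Qed.

Lemma mono_lim tmax f t0 : in_dom tmax t0 ->
  (forall s t, t0 <= s -> s <= t -> in_dom tmax t -> f s <= f t) ->
  ext_lim_exists_at_tmax tmax f.
Proof.
  intros H0 Hm.
  destruct (classic (exists M, forall t, t0 <= t -> in_dom tmax t -> f t <= M)) as [[M HM]|Hn].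
  - set (E := fun y => exists t, t0 <= t /\ in_dom tmax t /\ y = f t).
    assert (Hb : bound E) by (exists M; intros y [t [h1 [h2 ->]]]; auto).
    assert (HE : exists y, E y) by (exists (f t0); exists t0; repeat split; auto; lra).
    destruct (completeness E Hb HE) as [l [Hub Hlub]].
    left. exists l. intros eps He.
    destruct (classic (exists t1, t0 <= t1 /\ in_dom tmax t1 /\ l - eps < f t1)) as [[t1 [h1 [h2 h3]]]|Hn].
    + exists t1; split; auto. intros t Ht Hd.
      assert (f t1 <= f t) by (apply Hm; auto; lra).
      assert (f t <= l) by (apply Hub; exists t; repeat split; auto; lra).
      rewrite Rabs_left1; lra.
    + exfalso. assert (l <= l - eps); [|lra].
      apply Hlub. intros y [t [h1 [h2 ->]]].
      destruct (Rle_dec (f t) (l - eps)); auto. exfalso; apply Hn; exists t; repeat split; auto; lra.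
  - right; left. intros M.
    destruct (classic (exists t1, t0 <= t1 /\ in_dom tmax t1 /\ M < f t1)) as [[t1 [h1 [h2 h3]]]|Hn'].
    + exists t1; split; auto. intros t Ht Hd. assert (f t1 <= f t) by (apply Hm; auto; lra). lra.
    + exfalso. apply Hn. exists M. intros t h1 h2.
      destruct (Rle_dec (f t) M); auto. exfalso; apply Hn'; exists t; repeat split; auto; lra.
Qed.

Lemma anti_lim tmax f t0 : in_dom tmax t0 ->
  (forall s t, t0 <= s -> s <= t -> in_dom tmax t -> f t <= f s) ->
  ext_lim_exists_at_tmax tmax f.
Proof.
  intros H0 Hm.
  destruct (mono_lim tmax (fun t => - f t) t0 H0) as [[l Hl]|[Hp|Hmi]].
  - intros s t h1 h2 h3. specialize (Hm s t h1 h2 h3). lra.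
  - left. exists (- l). intros eps He. destruct (Hl eps He) as [t1 [h1 h2]].
    exists t1; split; auto. intros t h3 h4. specialize (h2 t h3 h4).
    replace (f t - - l) with (- (- f t - l)) by ring. rewrite Rabs_Ropp; auto.
  - right; right. intros M. destruct (Hp (- M)) as [t1 [h1 h2]].
    exists t1; split; auto. intros t h3 h4. specialize (h2 t h3 h4). lra.
  - right; left. intros M. destruct (Hmi (- M)) as [t1 [h1 h2]].
    exists t1; split; auto. intros t h3 h4. specialize (h2 t h3 h4). lra.
Qed.


Lemma mvt_neg f f' a b :
  a < b -> (forall c, a <= c <= b -> derivable_pt_lim f c (f' c)) ->
  (forall c, a < c < b -> f' c < 0) -> f b < f a.
Proof.
  intros Hab Hd Hp. destruct (MVT_cor2 f f' a b Hab Hd) as [c [Hc1 Hc2]].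
  specialize (Hp c Hc2). assert (f' c * (b - a) < 0).
  { replace (f' c * (b - a)) with (- ((- f' c) * (b - a))) by ring.
    assert (0 < (- f' c) * (b - a)) by (apply Rmult_lt_0_compat; lra). lra. }
  lra.
Qed.

Lemma exp_le_exp x y : x <= y -> exp x <= exp y.
Proof. intros H; destruct H as [H|H]; [left; apply exp_increasing; auto|right; subst; auto]. Qed.


Theorem lemma5p1 (d : nat) (q : R) (tmax : option R)
  (X Y Z W g : R -> R) (C : R) :
  (1 <= d)%nat ->
  solves_S d q tmax X Y Z W ->
  (forall t, in_dom tmax t -> 0 < Y t /\ 0 < W t) ->
  lim_minus_infty X 0 -> lim_minus_infty Y 0 ->
  lim_minus_infty Z 1 -> lim_minus_infty W 0 ->
  (forall t, in_dom tmax t -> 0 < g t /\ derivable_pt_lim g t (g t * X t)) ->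
  (forall t, in_dom tmax t ->
     INR d * X t ^ 2 + A2 d * Y t ^ 2 + Z t ^ 2 - A3 d q * W t ^ 2
       = 1 - C * (g t * Y t) ^ 2) ->
  0 < C ->
  (forall t0, in_dom tmax t0 -> X t0 < 0 ->
     forall t, t0 < t -> in_dom tmax t -> X t < 0) /\
  (forall t0, in_dom tmax t0 -> Z t0 - X t0 < 0 ->
     forall t, t0 < t -> in_dom tmax t -> Z t - X t < 0) /\
  ext_lim_exists_at_tmax tmax g /\
  ext_lim_exists_at_tmax tmax (fun t => W t / Y t).
Proof.
  intros Hd1 HS Hpos HX HY HZ HW Hg HFI HC. unfold solves_S in HS.
  assert (Hdd : 1 <= INR d) by (apply (le_INR 1 d) in Hd1; simpl in Hd1; lra).
  assert (HA2 : A2 d = INR d * (INR d + 2)) by reflexivity.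
  assert (HA3 : 0 <= A3 d q).
  { unfold A3. assert (0 <= q^2) by nra. assert (0 <= (INR d + 2)^2) by nra.
    assert (0 <= / 4 * INR d) by (apply Rmult_le_pos; lra). 
    apply Rmult_le_pos; [apply Rmult_le_pos|]; auto. }
  set (a3 := A3 d q) in *. clearbody a3.
  rewrite HA2 in HFI.
  set (dd := INR d) in *. clearbody dd.
  assert (HdX : forall t, in_dom tmax t -> derivable_pt_lim X t
    (X t * (dd * X t ^ 2 + Z t ^ 2 - 1) + (dd + 2) * Y t ^ 2 - 2 * (a3 / dd) * W t ^ 2)).
  { intros t Ht. destruct (HS t Ht) as [H _]. eapply dl_val; [exact H|].
    rewrite HA2. field. lra. }
  assert (HdY : forall t, in_dom tmax t -> derivable_pt_lim Y t
    (Y t * (dd * X t ^ 2 + Z t ^ 2 - X t))) by (intros t Ht; apply (HS t Ht)).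
  assert (HdZ : forall t, in_dom tmax t -> derivable_pt_lim Z t
    (Z t * (dd * X t ^ 2 + Z t ^ 2 - 1) + a3 * W t ^ 2)) by (intros t Ht; apply (HS t Ht)).
  assert (HdW : forall t, in_dom tmax t -> derivable_pt_lim W t
    (W t * (dd * X t ^ 2 + Z t ^ 2 - 2 * X t + Z t))) by (intros t Ht; apply (HS t Ht)).
  clear HS HA2.
  assert (FI : forall t, in_dom tmax t -> dd * X t ^ 2 + Z t ^ 2 - 1
     = - C * (g t * Y t) ^ 2 - dd * (dd + 2) * Y t ^ 2 + a3 * W t ^ 2).
  { intros t Ht. specialize (HFI t Ht). lra. }
  assert (HL : forall t, in_dom tmax t -> 0 < C * (g t * Y t) ^ 2).
  { intros t Ht. destruct (Hpos t Ht). destruct (Hg t Ht).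
    apply Rmult_lt_0_compat; auto. apply pow_lt. apply Rmult_lt_0_compat; auto. }
  assert (HcX : forall t, in_dom tmax t -> ctsat X t) by (intros t Ht; eapply cont_of_deriv; apply HdX; auto).
  assert (HcZ : forall t, in_dom tmax t -> ctsat Z t) by (intros t Ht; eapply cont_of_deriv; apply HdZ; auto).
  assert (HdR : forall t, in_dom tmax t -> derivable_pt_lim (fun s => W s / Y s) t
     (W t / Y t * (Z t - X t))).
  { intros t Ht. destruct (Hpos t Ht).
    eapply dl_val; [apply (derivable_pt_lim_div W Y); [apply HdW|apply HdY|]; auto; lra|].
    unfold Rsqr. field. lra. }
  assert (HdS : forall t, in_dom tmax t -> derivable_pt_lim (fun s => dd * X s + Z s - 1) t
     ((dd * X t + Z t - 1) * (dd * X t ^ 2 + Z t ^ 2 - 1) - C * (g t * Y t) ^ 2)).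
  { intros t Ht.
    eapply dl_val.
    - apply (derivable_pt_lim_minus (fun s => dd * X s + Z s) (fct_cte 1)).
      + apply (derivable_pt_lim_plus (mult_real_fct dd X) Z).
        * apply derivable_pt_lim_scal. apply HdX; auto.
        * apply HdZ; auto.
      + apply derivable_pt_lim_const.
    - specialize (FI t Ht). field_simplify; [|lra]. nra. }
  assert (HdV : forall t, in_dom tmax t -> derivable_pt_lim (fun s => Z s - X s) t
     ((Z t - X t) * (dd * X t ^ 2 + Z t ^ 2 - 1)
       + (dd + 2) / dd * (Y t ^ 2 * (a3 * (W t / Y t) ^ 2 - dd)))).
  { intros t Ht. destruct (Hpos t Ht).
    eapply dl_val.
    - apply (derivable_pt_lim_minus Z X); [apply HdZ|apply HdX]; auto.
    - field. lra. }
  assert (HXQ : forall t, in_dom tmax t ->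
     X t * (dd * X t ^ 2 + Z t ^ 2 - 1) + (dd + 2) * Y t ^ 2 - 2 * (a3 / dd) * W t ^ 2
     = X t * (dd * X t ^ 2 + Z t ^ 2 - 1) + Y t ^ 2 * (dd * (dd + 2) - 2 * a3 * (W t / Y t) ^ 2) / dd).
  { intros t Ht. destruct (Hpos t Ht). field. lra. }
  assert (HZpos : forall t, in_dom tmax t -> 0 < Z t).
  { intros t Ht. destruct (Rlt_dec 0 (Z t)) as [|Hn]; auto. exfalso.
    destruct (HZ (1/2)) as [t1 Ht1]; [lra|].
    set (s0 := Rmin t t1 - 1).
    assert (Hs0t : s0 < t) by (unfold s0; generalize (Rmin_l t t1); lra).
    assert (Hs0 : 0 < Z s0).
    { assert (s0 < t1) by (unfold s0; generalize (Rmin_r t t1); lra).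
      specialize (Ht1 s0 H). apply Rabs_def2 in Ht1. lra. }
    destruct (first_exit (fun s => - Z s) s0 t 0) as [z0 [Hz0 [Hz0e Hz0s]]]; auto.
    - intros x Hx eps He. assert (Hxd : in_dom tmax x) by (apply (dom_lt _ _ _ Ht); lra).
      destruct (HcZ x Hxd eps He) as [del [h1 h2]].
      exists del; split; auto. intros y Hy. specialize (h2 y Hy).
      replace (- Z y - - Z x) with (- (Z y - Z x)) by ring. rewrite Rabs_Ropp; auto.
    - lra.
    - lra.
    - assert (Hm : Z s0 * exp s0 <= Z z0 * exp z0).
      { apply (mvt_nonneg (fun u => Z u * exp u)
          (fun u => (Z u * (dd * X u ^ 2 + Z u ^ 2 - 1) + a3 * W u ^ 2) * exp u + Z u * (exp u * 1))).
        - lra.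
        - intros c Hc. apply (deriv_mul_exp Z (fun u => u)).
          + apply HdZ. apply (dom_lt _ _ _ Ht). lra.
          + apply derivable_pt_lim_id.
        - intros c Hc. assert (Hzc : 0 <= Z c) by (assert (- Z c < 0) by (apply Hz0s; lra); lra).
          assert (0 < exp c) by apply exp_pos.
          assert (0 <= X c ^ 2) by nra. assert (0 <= W c ^ 2) by nra.
          assert (0 <= Z c * (dd * X c ^ 2 + Z c ^ 2)) by (apply Rmult_le_pos; nra).
          assert (0 <= a3 * W c ^ 2) by nra.
          assert (0 <= (Z c * (dd * X c ^ 2 + Z c ^ 2 - 1) + a3 * W c ^ 2 + Z c)) by nra.
          nra. }
      assert (Z z0 = 0) by lra. rewrite H in Hm.
      assert (0 < Z s0 * exp s0) by (apply Rmult_lt_0_compat; auto; apply exp_pos). lra. }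
  assert (HcS : forall t, in_dom tmax t -> ctsat (fun s => dd * X s + Z s - 1) t)
    by (intros t Ht; eapply cont_of_deriv; apply HdS; auto).
  assert (Sfwd : forall s t, in_dom tmax t -> s < t -> dd * X s + Z s - 1 < 0 ->
      dd * X t + Z t - 1 < 0).
  { intros s t Ht Hst Hs. destruct (Rlt_dec (dd * X t + Z t - 1) 0) as [|Hn]; auto. exfalso.
    destruct (first_exit (fun u => dd * X u + Z u - 1) s t 0) as [t1 [Ht1 [Ht1e Ht1s]]]; auto.
    - intros x Hx. apply HcS. apply (dom_lt _ _ _ Ht); lra.
    - lra.
    - assert (Hd1' : in_dom tmax t1) by (apply (dom_lt _ _ _ Ht); lra).
      assert (Hl := left_approach _ _ _ s (HdS t1 Hd1') ltac:(lra)).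
      simpl in Hl. rewrite Ht1e in Hl.
      assert (0 <= 0 * (dd * X t1 ^ 2 + Z t1 ^ 2 - 1) - C * (g t1 * Y t1) ^ 2).
      { apply Hl. intros u Hu. apply Ht1s. lra. }
      specialize (HL t1 Hd1'). lra. }
  assert (HSneg : forall t, in_dom tmax t -> dd * X t + Z t - 1 < 0).
  { intros t Ht. destruct (Rlt_dec (dd * X t + Z t - 1) 0) as [|Hn]; auto. exfalso.
    assert (Snn : forall s, s <= t -> 0 <= dd * X s + Z s - 1).
    { intros s Hs. destruct (Rle_dec 0 (dd * X s + Z s - 1)) as [|Hn']; auto.
      exfalso. destruct (Req_dec s t) as [->|Hne]; [lra|].
      apply Hn. apply (Sfwd s t Ht); lra. }
    destruct (HX (1/10)) as [tx Htx]; [lra|].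
    destruct (HZ (1/10)) as [tz Htz]; [lra|].
    set (T := Rmin t (Rmin tx tz) - 1).
    assert (HT1 : T < t) by (unfold T; generalize (Rmin_l t (Rmin tx tz)); lra).
    assert (HT2 : T < tx) by (unfold T; generalize (Rmin_r t (Rmin tx tz)) (Rmin_l tx tz); lra).
    assert (HT3 : T < tz) by (unfold T; generalize (Rmin_r t (Rmin tx tz)) (Rmin_r tx tz); lra).
    assert (HdT : forall s, s <= T -> in_dom tmax s) by (intros s Hs; apply (dom_lt _ _ _ Ht); lra).
    set (KW := W T * exp (- T)).
    assert (HWb : forall s, s <= T -> W s * exp (- s) <= KW).
    { intros s Hs. unfold KW.
      apply (mvt_nonneg (fun u => W u * exp (- u))
          (fun u => (W u * (dd * X u ^ 2 + Z u ^ 2 - 2 * X u + Z u)) * exp (- u) + W u * (exp (- u) * (- 1)))); auto.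
      - intros c Hc. apply (deriv_mul_exp W (fun u => - u)).
        + apply HdW; apply HdT; lra.
        + apply (derivable_pt_lim_opp id). apply derivable_pt_lim_id.
      - intros c Hc.
        assert (h1 := Htx c ltac:(lra)). assert (h2 := Htz c ltac:(lra)).
        apply Rabs_def2 in h1. apply Rabs_def2 in h2.
        destruct (Hpos c (HdT c ltac:(lra))) as [_ HWc].
        assert (0 < exp (- c)) by apply exp_pos.
        assert (0 <= dd * X c ^ 2) by (apply Rmult_le_pos; nra).
        assert (0 <= dd * X c ^ 2 + Z c ^ 2 - 2 * X c + Z c - 1) by nra.
        assert (0 <= W c * (dd * X c ^ 2 + Z c ^ 2 - 2 * X c + Z c - 1)) by (apply Rmult_le_pos; lra).
        nra. }
    set (M := a3 * KW ^ 2 * exp T).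
    assert (HM : 0 <= M).
    { unfold M. apply Rmult_le_pos; [|left; apply exp_pos]. apply Rmult_le_pos; auto. nra. }
    assert (HWM : forall s, s <= T -> a3 * W s ^ 2 <= M * exp s).
    { intros s Hs. specialize (HWb s Hs).
      destruct (Hpos s (HdT s Hs)) as [_ HWs].
      assert (HWs' : W s <= KW * exp s).
      { assert (W s = W s * exp (- s) * exp s) by (rewrite Rmult_assoc, <- exp_plus; replace (- s + s) with 0 by ring; rewrite exp_0; ring).
        rewrite H. apply Rmult_le_compat_r; [left; apply exp_pos|auto]. }
      assert (Hes : exp s * exp s <= exp T * exp s).
      { apply Rmult_le_compat_r; [left; apply exp_pos|]. apply exp_le_exp; lra. }
      assert (W s ^ 2 <= KW ^ 2 * exp T * exp s).
      { assert (W s ^ 2 <= (KW * exp s) ^ 2) by (apply pow_incr; lra).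
        assert (0 <= KW ^ 2) by nra. nra. }
      unfold M. nra. }
    set (phi := fun u => (dd * X u + Z u - 1) * exp (- (M * exp u))).
    assert (Hphi : forall a b, a < b -> b <= T -> phi b < phi a).
    { intros a b Hab HbT. unfold phi.
      apply (mvt_neg (fun u => (dd * X u + Z u - 1) * exp (- (M * exp u)))
        (fun u => ((dd * X u + Z u - 1) * (dd * X u ^ 2 + Z u ^ 2 - 1) - C * (g u * Y u) ^ 2)
           * exp (- (M * exp u)) + (dd * X u + Z u - 1) * (exp (- (M * exp u)) * (- (M * exp u))))); auto.
      - intros c Hc. apply (deriv_mul_exp (fun u => dd * X u + Z u - 1) (fun u => - (M * exp u))).
        + apply HdS; apply HdT; lra.
        + apply (derivable_pt_lim_opp (mult_real_fct M exp)). apply derivable_pt_lim_scal.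
          apply derivable_pt_lim_exp.
      - intros c Hc. assert (Hcd := HdT c ltac:(lra)).
        specialize (FI c Hcd). specialize (HL c Hcd). specialize (HWM c ltac:(lra)).
        specialize (Snn c ltac:(lra)).
        assert (0 < exp (- (M * exp c))) by apply exp_pos.
        assert (0 <= dd * (dd + 2) * Y c ^ 2) by (apply Rmult_le_pos; nra).
        assert (dd * X c ^ 2 + Z c ^ 2 - 1 <= M * exp c) by lra.
        assert ((dd * X c + Z c - 1) * (dd * X c ^ 2 + Z c ^ 2 - 1) <= (dd * X c + Z c - 1) * (M * exp c))
          by (apply Rmult_le_compat_l; lra).
        nra. }
    set (T' := T - 1).
    assert (Hp0 : 0 < phi T').
    { assert (phi T < phi T') by (apply Hphi; unfold T'; lra).
      assert (0 <= phi T) by (unfold phi; apply Rmult_le_pos; [apply Snn; lra|left; apply exp_pos]).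
      lra. }
    remember (phi T') as del eqn:Hdel_eq.
    destruct (HX (del / (2 * (dd + 1)))) as [tx' Htx'].
    { unfold Rdiv; apply Rmult_lt_0_compat; [lra|apply Rinv_0_lt_compat; lra]. }
    destruct (HZ (del / 2)) as [tz' Htz']; [lra|].
    set (s := Rmin T' (Rmin tx' tz') - 1).
    assert (Hs1 : s < T') by (unfold s; generalize (Rmin_l T' (Rmin tx' tz')); lra).
    assert (Hs2 : s < tx') by (unfold s; generalize (Rmin_r T' (Rmin tx' tz')) (Rmin_l tx' tz'); lra).
    assert (Hs3 : s < tz') by (unfold s; generalize (Rmin_r T' (Rmin tx' tz')) (Rmin_r tx' tz'); lra).
    assert (Hps : del < phi s) by (rewrite Hdel_eq; apply Hphi; unfold T' in *; lra).
    assert (Hsle : phi s <= dd * X s + Z s - 1).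
    { unfold phi. assert (h := Snn s ltac:(unfold T' in *; lra)).
      assert (exp (- (M * exp s)) <= 1).
      { rewrite <- exp_0. apply exp_le_exp. assert (0 < exp s) by apply exp_pos. nra. }
      assert (0 < exp (- (M * exp s))) by apply exp_pos. nra. }
    specialize (Htx' s Hs2). specialize (Htz' s Hs3).
    apply Rabs_def2 in Htx'. apply Rabs_def2 in Htz'.
    assert (dd * X s < del / 2).
    { replace (del / 2) with (dd * (del / (2 * (dd + 1))) + del / (2 * (dd + 1))) by (field; lra).
      rewrite Rminus_0_r in Htx'.
      assert (0 < del / (2 * (dd + 1))) by (apply Rdiv_lt_0_compat; lra). nra. }
    lra. }
  assert (HWr : forall s, in_dom tmax s -> W s ^ 2 = (W s / Y s) ^ 2 * Y s ^ 2).
  { intros s Hs. destruct (Hpos s Hs). field. lra. }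
  assert (Hrpos : forall s, in_dom tmax s -> 0 < W s / Y s).
  { intros s Hs. destruct (Hpos s Hs). unfold Rdiv. apply Rmult_lt_0_compat; auto. apply Rinv_0_lt_compat; auto. }
  assert (C1 : forall t0, in_dom tmax t0 -> X t0 < 0 ->
     forall t, t0 < t -> in_dom tmax t -> X t < 0).
  { intros t0 Ht0 HX0.
    assert (Q0 : dd * (dd + 2) - 2 * a3 * (W t0 / Y t0) ^ 2 < 0).
    { destruct (Rlt_dec (dd * (dd + 2) - 2 * a3 * (W t0 / Y t0) ^ 2) 0) as [|Hn]; auto.
      exfalso. apply Rnot_lt_le in Hn.
      set (c := X t0 / 2).
      destruct (HX (- c)) as [t1 Ht1]; [unfold c; lra|].
      set (s1 := Rmin t0 t1 - 1).
      assert (Hs1a : s1 < t0) by (unfold s1; generalize (Rmin_l t0 t1); lra).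
      assert (Hs1b : c < X s1).
      { assert (s1 < t1) by (unfold s1; generalize (Rmin_r t0 t1); lra).
        specialize (Ht1 s1 H). apply Rabs_def2 in Ht1. lra. }
      destruct (last_exit X s1 t0 c) as [a [Ha [Hae Has]]]; auto.
      { intros x Hx. apply HcX. apply (dom_lt _ _ _ Ht0); lra. }
      { unfold c; lra. }
      assert (Hr : forall s, a < s < t0 -> W s / Y s < W t0 / Y t0).
      { intros s Hs. apply (mvt_pos (fun u => W u / Y u) (fun u => W u / Y u * (Z u - X u))).
        - lra.
        - intros c' Hc'. apply HdR. apply (dom_lt _ _ _ Ht0); lra.
        - intros c' Hc'. assert (Hd' : in_dom tmax c') by (apply (dom_lt _ _ _ Ht0); lra).
          apply Rmult_lt_0_compat; [apply Hrpos; auto|].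
          assert (X c' < c) by (apply Has; lra). specialize (HZpos c' Hd'). unfold c in *; lra. }
      assert (Hpd : forall s, a < s < t0 -> 0 <
         X s * (dd * X s ^ 2 + Z s ^ 2 - 1) + (dd + 2) * Y s ^ 2 - 2 * (a3 / dd) * W s ^ 2).
      { intros s Hs. assert (Hsd : in_dom tmax s) by (apply (dom_lt _ _ _ Ht0); lra).
        rewrite (HXQ s Hsd).
        assert (h1 := Hr s Hs). assert (h2 := Hrpos s Hsd).
        assert (h3 : (W s / Y s) ^ 2 <= (W t0 / Y t0) ^ 2) by (apply pow_incr; lra).
        assert (h4 : a3 * (W s / Y s) ^ 2 <= a3 * (W t0 / Y t0) ^ 2) by (apply Rmult_le_compat_l; auto).
        assert (Hq : 0 <= dd * (dd + 2) - 2 * a3 * (W s / Y s) ^ 2) by lra.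
        assert (HXs : X s < 0) by (assert (X s < c) by (apply Has; lra); unfold c in *; lra).
        assert (HH : dd * X s ^ 2 + Z s ^ 2 - 1 < 0).
        { rewrite (FI s Hsd). rewrite (HWr s Hsd). specialize (HL s Hsd).
          destruct (Hpos s Hsd) as [HYs _].
          assert (0 <= Y s ^ 2) by nra.
          assert (0 <= (dd * (dd + 2) - 2 * a3 * (W s / Y s) ^ 2) * Y s ^ 2) by (apply Rmult_le_pos; auto).
          assert (0 <= dd * (dd + 2) * Y s ^ 2) by (apply Rmult_le_pos; nra).
          nra. }
        assert (0 < X s * (dd * X s ^ 2 + Z s ^ 2 - 1)) by nra.
        assert (0 <= Y s ^ 2 * (dd * (dd + 2) - 2 * a3 * (W s / Y s) ^ 2) / dd).
        { unfold Rdiv. apply Rmult_le_pos; [apply Rmult_le_pos; nra|]. left; apply Rinv_0_lt_compat; lra. }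
        lra. }
      assert (X a < X t0).
      { apply (mvt_pos X (fun u => X u * (dd * X u ^ 2 + Z u ^ 2 - 1) + (dd + 2) * Y u ^ 2 - 2 * (a3 / dd) * W u ^ 2)).
        - lra.
        - intros c' Hc'. apply HdX. apply (dom_lt _ _ _ Ht0); lra.
        - exact Hpd. }
      unfold c in *; lra. }
    intros t Htt Ht. destruct (Rlt_dec (X t) 0) as [|Hn]; auto. exfalso.
    destruct (first_exit X t0 t 0) as [t1 [Ht1 [Ht1e Ht1s]]]; auto.
    { intros x Hx. apply HcX. apply (dom_lt _ _ _ Ht); lra. }
    { lra. }
    assert (Ht1d : in_dom tmax t1) by (apply (dom_lt _ _ _ Ht); lra).
    assert (Hr1 : W t0 / Y t0 < W t1 / Y t1).
    { apply (mvt_pos (fun u => W u / Y u) (fun u => W u / Y u * (Z u - X u))).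
      - lra.
      - intros c' Hc'. apply HdR. apply (dom_lt _ _ _ Ht); lra.
      - intros c' Hc'. assert (Hd' : in_dom tmax c') by (apply (dom_lt _ _ _ Ht); lra).
        apply Rmult_lt_0_compat; [apply Hrpos; auto|].
        assert (X c' < 0) by (apply Ht1s; lra). specialize (HZpos c' Hd'). lra. }
    assert (Hl := left_approach _ _ _ t0 (HdX t1 Ht1d) ltac:(lra)).
    rewrite (HXQ t1 Ht1d), Ht1e in Hl.
    assert (h0 : 0 <= 0 * (dd * 0 ^ 2 + Z t1 ^ 2 - 1) +
        Y t1 ^ 2 * (dd * (dd + 2) - 2 * a3 * (W t1 / Y t1) ^ 2) / dd).
    { apply Hl. intros u Hu. apply Ht1s; lra. }
    assert (h2 := Hrpos t0 Ht0).
    assert (h3 : (W t0 / Y t0) ^ 2 <= (W t1 / Y t1) ^ 2) by (apply pow_incr; lra).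
    assert (h4 : a3 * (W t0 / Y t0) ^ 2 <= a3 * (W t1 / Y t1) ^ 2) by (apply Rmult_le_compat_l; auto).
    assert (Hq : dd * (dd + 2) - 2 * a3 * (W t1 / Y t1) ^ 2 < 0) by lra.
    destruct (Hpos t1 Ht1d) as [HY1 _].
    assert (Y t1 ^ 2 * (dd * (dd + 2) - 2 * a3 * (W t1 / Y t1) ^ 2) / dd < 0).
    { unfold Rdiv. assert (0 < / dd) by (apply Rinv_0_lt_compat; lra).
      assert (0 < Y t1 ^ 2) by nra. 
      assert (Y t1 ^ 2 * (dd * (dd + 2) - 2 * a3 * (W t1 / Y t1) ^ 2) < 0) by nra. nra. }
    assert (0 * (dd * 0 ^ 2 + Z t1 ^ 2 - 1) = 0) by ring. lra. }
  assert (HcV : forall t, in_dom tmax t -> ctsat (fun s => Z s - X s) t)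
    by (intros t Ht; eapply cont_of_deriv; apply HdV; auto).
  assert (C2 : forall t0, in_dom tmax t0 -> Z t0 - X t0 < 0 ->
     forall t, t0 < t -> in_dom tmax t -> Z t - X t < 0).
  { intros t0 Ht0 HV0.
    assert (R0 : a3 * (W t0 / Y t0) ^ 2 - dd < 0).
    { destruct (Rlt_dec (a3 * (W t0 / Y t0) ^ 2 - dd) 0) as [|Hn]; auto.
      exfalso. apply Rnot_lt_le in Hn.
      set (c := (Z t0 - X t0) / 2).
      destruct (HX (1/4)) as [tx Htx]; [lra|].
      destruct (HZ (1/4)) as [tz Htz]; [lra|].
      set (s1 := Rmin t0 (Rmin tx tz) - 1).
      assert (Hs1a : s1 < t0) by (unfold s1; generalize (Rmin_l t0 (Rmin tx tz)); lra).
      assert (Hs1b : c < Z s1 - X s1).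
      { assert (s1 < tx) by (unfold s1; generalize (Rmin_r t0 (Rmin tx tz)) (Rmin_l tx tz); lra).
        assert (s1 < tz) by (unfold s1; generalize (Rmin_r t0 (Rmin tx tz)) (Rmin_r tx tz); lra).
        specialize (Htx s1 H). specialize (Htz s1 H0).
        apply Rabs_def2 in Htx. apply Rabs_def2 in Htz. unfold c; lra. }
      destruct (last_exit (fun s => Z s - X s) s1 t0 c) as [a [Ha [Hae Has]]]; auto.
      { intros x Hx. apply HcV. apply (dom_lt _ _ _ Ht0); lra. }
      { unfold c; lra. }
      assert (Hr : forall s, a < s < t0 -> W t0 / Y t0 < W s / Y s).
      { intros s Hs. apply (mvt_neg (fun u => W u / Y u) (fun u => W u / Y u * (Z u - X u))).
        - lra.
        - intros c' Hc'. apply HdR. apply (dom_lt _ _ _ Ht0); lra.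
        - intros c' Hc'. assert (Hd' : in_dom tmax c') by (apply (dom_lt _ _ _ Ht0); lra).
          assert (Z c' - X c' < c) by (apply (Has c'); lra).
          assert (h := Hrpos c' Hd'). unfold c in *. nra. }
      assert (Hpd : forall s, a < s < t0 -> 0 <
         (Z s - X s) * (dd * X s ^ 2 + Z s ^ 2 - 1)
         + (dd + 2) / dd * (Y s ^ 2 * (a3 * (W s / Y s) ^ 2 - dd))).
      { intros s Hs. assert (Hsd : in_dom tmax s) by (apply (dom_lt _ _ _ Ht0); lra).
        assert (h1 := Hr s Hs). assert (h2 := Hrpos t0 Ht0).
        assert (h3 : (W t0 / Y t0) ^ 2 <= (W s / Y s) ^ 2) by (apply pow_incr; lra).
        assert (h4 : a3 * (W t0 / Y t0) ^ 2 <= a3 * (W s / Y s) ^ 2) by (apply Rmult_le_compat_l; auto).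
        assert (Hq : 0 <= a3 * (W s / Y s) ^ 2 - dd) by lra.
        assert (HVs : Z s - X s < 0) by (assert (Z s - X s < c) by (apply (Has s); lra); unfold c in *; lra).
        assert (HZs := HZpos s Hsd). assert (HSs := HSneg s Hsd).
        assert (HH : dd * X s ^ 2 + Z s ^ 2 - 1 < 0).
        { assert (e1 : 0 < dd * X s + Z s) by nra.
          assert (e2 : (dd * X s + Z s) ^ 2 < 1) by nra.
          assert (f1 : 0 <= (dd - 1) * X s ^ 2) by (apply Rmult_le_pos; nra).
          assert (f2 : 0 <= X s * Z s) by nra.
          assert (f3 : 0 <= dd * ((dd - 1) * X s ^ 2)) by (apply Rmult_le_pos; lra).
          assert (f4 : 0 <= dd * (X s * Z s)) by (apply Rmult_le_pos; lra).
          assert (e3 : dd * X s ^ 2 + Z s ^ 2 <= (dd * X s + Z s) ^ 2).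
          { assert ((dd * X s + Z s) ^ 2 - (dd * X s ^ 2 + Z s ^ 2) = dd * ((dd - 1) * X s ^ 2) + 2 * (dd * (X s * Z s))) by ring. lra. }
          lra. }
        assert (0 < (Z s - X s) * (dd * X s ^ 2 + Z s ^ 2 - 1)) by nra.
        assert (0 <= (dd + 2) / dd * (Y s ^ 2 * (a3 * (W s / Y s) ^ 2 - dd))).
        { apply Rmult_le_pos; [unfold Rdiv; apply Rmult_le_pos; [lra|left; apply Rinv_0_lt_compat; lra]|].
          apply Rmult_le_pos; nra. }
        lra. }
      assert (Z a - X a < Z t0 - X t0).
      { apply (mvt_pos (fun u => Z u - X u) (fun u => (Z u - X u) * (dd * X u ^ 2 + Z u ^ 2 - 1)
         + (dd + 2) / dd * (Y u ^ 2 * (a3 * (W u / Y u) ^ 2 - dd)))).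
        - lra.
        - intros c' Hc'. apply HdV. apply (dom_lt _ _ _ Ht0); lra.
        - exact Hpd. }
      simpl in Hae. unfold c in *; lra. }
    intros t Htt Ht. destruct (Rlt_dec (Z t - X t) 0) as [|Hn]; auto. exfalso.
    destruct (first_exit (fun s => Z s - X s) t0 t 0) as [t1 [Ht1 [Ht1e Ht1s]]]; auto.
    { intros x Hx. apply HcV. apply (dom_lt _ _ _ Ht); lra. }
    { lra. }
    assert (Ht1d : in_dom tmax t1) by (apply (dom_lt _ _ _ Ht); lra).
    assert (Hr1 : W t1 / Y t1 < W t0 / Y t0).
    { apply (mvt_neg (fun u => W u / Y u) (fun u => W u / Y u * (Z u - X u))).
      - lra.
      - intros c' Hc'. apply HdR. apply (dom_lt _ _ _ Ht); lra.
      - intros c' Hc'. assert (Hd' : in_dom tmax c') by (apply (dom_lt _ _ _ Ht); lra).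
        assert (Z c' - X c' < 0) by (apply (Ht1s c'); lra).
        assert (h := Hrpos c' Hd'). nra. }
    assert (Hl := left_approach _ _ _ t0 (HdV t1 Ht1d) ltac:(lra)).
    simpl in Ht1e. simpl in Hl. rewrite Ht1e in Hl.
    assert (h0 : 0 <= 0 * (dd * X t1 ^ 2 + Z t1 ^ 2 - 1)
         + (dd + 2) / dd * (Y t1 ^ 2 * (a3 * (W t1 / Y t1) ^ 2 - dd))).
    { apply Hl. intros u Hu. apply (Ht1s u); lra. }
    assert (h2 := Hrpos t1 Ht1d).
    assert (h3 : (W t1 / Y t1) ^ 2 <= (W t0 / Y t0) ^ 2) by (apply pow_incr; lra).
    assert (h4 : a3 * (W t1 / Y t1) ^ 2 <= a3 * (W t0 / Y t0) ^ 2) by (apply Rmult_le_compat_l; auto).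
    assert (Hq : a3 * (W t1 / Y t1) ^ 2 - dd < 0) by lra.
    destruct (Hpos t1 Ht1d) as [HY1 _].
    assert ((dd + 2) / dd * (Y t1 ^ 2 * (a3 * (W t1 / Y t1) ^ 2 - dd)) < 0).
    { assert (0 < (dd + 2) / dd) by (unfold Rdiv; apply Rmult_lt_0_compat; [lra|apply Rinv_0_lt_compat; lra]).
      assert (0 < Y t1 ^ 2) by nra. 
      assert (Y t1 ^ 2 * (a3 * (W t1 / Y t1) ^ 2 - dd) < 0) by nra. nra. }
    assert (0 * (dd * X t1 ^ 2 + Z t1 ^ 2 - 1) = 0) by ring. lra. }
  split; [exact C1|]. split; [exact C2|]. split.
  - destruct (classic (exists t0, in_dom tmax t0 /\ X t0 < 0)) as [[t0 [Ht0 HX0]]|Hn].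
    + apply (anti_lim tmax g t0 Ht0). intros s t Hs Hst Ht.
      assert (h := mvt_nonneg (fun u => - g u) (fun u => - (g u * X u)) s t Hst).
      cut (- g s <= - g t); [lra|]. apply h.
      * intros c Hc. apply (derivable_pt_lim_opp g). apply Hg. apply (dom_lt _ _ _ Ht); lra.
      * intros c Hc. assert (Hcd : in_dom tmax c) by (apply (dom_lt _ _ _ Ht); lra).
        assert (X c < 0) by (apply (C1 t0 Ht0 HX0); auto; lra).
        destruct (Hg c Hcd). nra.
    + destruct (dom_ne tmax) as [t0 Ht0].
      apply (mono_lim tmax g t0 Ht0). intros s t Hs Hst Ht.
      apply (mvt_nonneg g (fun u => g u * X u) s t Hst).
      * intros c Hc. apply Hg. apply (dom_lt _ _ _ Ht); lra.
      * intros c Hc. assert (Hcd : in_dom tmax c) by (apply (dom_lt _ _ _ Ht); lra).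
        assert (0 <= X c).
        { destruct (Rle_dec 0 (X c)); auto. exfalso; apply Hn; exists c; split; auto; lra. }
        destruct (Hg c Hcd). nra.
  - destruct (classic (exists t0, in_dom tmax t0 /\ Z t0 - X t0 < 0)) as [[t0 [Ht0 HX0]]|Hn].
    + apply (anti_lim tmax _ t0 Ht0). intros s t Hs Hst Ht.
      assert (h := mvt_nonneg (fun u => - (W u / Y u)) (fun u => - (W u / Y u * (Z u - X u))) s t Hst).
      cut (- (W s / Y s) <= - (W t / Y t)); [lra|]. apply h.
      * intros c Hc. apply (derivable_pt_lim_opp (fun u => W u / Y u)). apply HdR. apply (dom_lt _ _ _ Ht); lra.
      * intros c Hc. assert (Hcd : in_dom tmax c) by (apply (dom_lt _ _ _ Ht); lra).
        assert (Z c - X c < 0) by (apply (C2 t0 Ht0 HX0); auto; lra).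
        assert (h' := Hrpos c Hcd). nra.
    + destruct (dom_ne tmax) as [t0 Ht0].
      apply (mono_lim tmax _ t0 Ht0). intros s t Hs Hst Ht.
      apply (mvt_nonneg (fun u => W u / Y u) (fun u => W u / Y u * (Z u - X u)) s t Hst).
      * intros c Hc. apply HdR. apply (dom_lt _ _ _ Ht); lra.
      * intros c Hc. assert (Hcd : in_dom tmax c) by (apply (dom_lt _ _ _ Ht); lra).
        assert (0 <= Z c - X c).
        { destruct (Rle_dec 0 (Z c - X c)); auto. exfalso; apply Hn; exists c; split; auto; lra. }
        assert (h' := Hrpos c Hcd). nra.
Qed.
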